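(* Let $G=\mathbb Z$ with the discrete topology, $Y=(0,\infty)\subset\mathbb R$, and let $\theta$ be the partial action of $\mathbb Z$ on $Y$ with $Y_n=(\max\{0,n\},\infty)$ and $\theta_n\colon Y_{-n}\to Y_n$, $y\mapsto n+y$. Then the enveloping space $Y_G$ of $\theta$ is $G$-homeomorphic to $\mathbb R$ endowed with the global action $\mathbb Z\times\mathbb R\to\mathbb R$, $(n,t)\mapsto n+t$.
   Context: The enveloping space is $Y_G=(G\times Y)/R$ with the quotient topology, where $(n,y)R(m,z)$ iff $y\in Y_{m-n}$ and $\theta_{n-m}(y)=z$, with the global action $k\cdot[n,y]=[k+n,y]$. A $G$-homeomorphism is a homeomorphism $f$ with $f(k\cdot x)=k\cdot f(x)$ for all $k,x$. *)

(* Defs.v *)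
From HB Require Import structures.
From mathcomp Require Import all_boot all_order all_algebra.
From mathcomp Require Import all_classical all_reals topology normedtype.
Set Implicit Arguments. Unset Strict Implicit. Unset Printing Implicit Defensive.
Import Order.TTheory GRing.Theory Num.Theory.
Import numFieldNormedType.Exports.
Local Open Scope classical_set_scope.
Local Open Scope ring_scope.

Section Envelope.
Variable R : realType.

Definition Yspace : set R := [set y | 0 < y].

Definition Ydom (n : int) : set R := [set y | Num.max 0 (n%:~R) < y].

Definition theta (n : int) (y : R) : R := n%:~R + y.

Definition GY : set (int * R) := [set p | Yspace p.2].

Definition Rrel (p q : int * R) : Prop :=
  GY p /\ GY q /\ Ydom (q.1 - p.1) p.2 /\ theta (p.1 - q.1) p.2 = q.2.

(* Open sets of G x Y, G = Z discrete, Y with the subspace topology of R: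
   U is open iff every slice {y in Y | (n,y) in U} is (relatively) open in Y. *)
Definition openGY (U : set (int * R)) : Prop :=
  U `<=` GY /\
  forall n : int, exists V : set R, open V /\
    forall y, Yspace y -> (U (n, y) <-> V y).

Definition cls (p : int * R) : set (int * R) := [set q | Rrel p q].

(* The enveloping space Y_G = (G x Y)/R : the set of classes [n,y]. *)
Definition YG : Type := {C : set (int * R) | exists p, GY p /\ C = cls p}.

Lemma mkYG_proof (n : int) (y : R) (hy : 0 < y) :
  exists p, GY p /\ cls (n, y) = cls p.
Proof. by exists (n, y). Qed.

Definition mkYG (n : int) (y : R) (hy : 0 < y) : YG :=
  exist _ (cls (n, y)) (@mkYG_proof n y hy).

Definition openYG (U : set YG) : Prop :=
  openGY [set p | GY p /\ exists C, U C /\ proj1_sig C = cls p].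

(* f : Y_G -> R is a G-homeomorphism onto R with the global action (n,t) |-> n+t,
   the action on Y_G being k . [n,y] = [k+n,y]. *)
Definition G_homeomorphism (f : YG -> R) : Prop :=
  (exists g : R -> YG,
      cancel f g /\ cancel g f /\
      (forall V : set R, open V -> openYG (f @^-1` V)) /\
      (forall U : set YG, openYG U -> open (g @^-1` U))) /\
  (forall (k n : int) (y : R) (hy : 0 < y),
      f (@mkYG (k + n) y hy) = k%:~R + f (@mkYG n y hy)).

End Envelope.

(* Main.v *)
Require Import Defs.
From HB Require Import structures.
From mathcomp Require Import all_boot all_order all_algebra.
From mathcomp Require Import all_classical all_reals topology normedtype.
From mathcomp Require Import lra.
Import Order.TTheory GRing.Theory Num.Theory.
Import numFieldNormedType.Exports.
Local Open Scope classical_set_scope.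
Local Open Scope ring_scope.

Section Proof.
Variable R : realType.

Lemma tr (c : R) : continuous (fun t : R => c + t).
Proof. move=> x. exact: (@continuousD _ _ _ (fun=> c) id x (@cst_continuous _ _ c x) (fun A (h : nbhs x A) => h)). Qed.

Definition sumR (p : int * R) : R := p.1%:~R + p.2.

Lemma RrelE (p q : int * R) : Rrel p q <-> GY p /\ GY q /\ sumR p = sumR q.
Proof.
case: p => n y; case: q => m z; rewrite /Rrel /GY /Ydom /theta /Yspace /sumR /=.
split.
- move=> [hy [hz [hd he]]]; split=> //; split=> //.
  rewrite -he intrB; lra.
- move=> [hy [hz he]]; split=> //; split=> //; split.
  + rewrite gt_max hy /= intrB; lra.
  + rewrite intrB; lra.
Qed.

Lemma cls_eq (p q : int * R) : GY p -> GY q -> (cls p = cls q <-> sumR p = sumR q).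
Proof.
move=> hp hq; split.
- move=> E.
  have : cls q q by apply/RrelE.
  by rewrite -E => /RrelE [_ [_ ->]].
- move=> E; apply/funext => r; apply/propext; rewrite /cls /=.
  split => /RrelE [_ [hr Er]]; apply/RrelE; split=> //; split=> //.
  + by rewrite -E.
  + by rewrite E.
Qed.

Definition fdef (C : YG R) : R := sumR (projT1 (cid (proj2_sig C))).

Lemma fE (C : YG R) p : GY p -> proj1_sig C = cls p -> fdef C = sumR p.
Proof.
move=> hp E; rewrite /fdef; case: cid => p' [hp' E'] /=.
apply: (proj1 (cls_eq p' p hp' hp)); by rewrite -E' E.
Qed.

Definition nof (t : R) : int := Num.floor t - 1.

Lemma nof_lt (t : R) : 0 < t - (nof t)%:~R.
Proof. rewrite /nof intrB; have := floor_le t; lra. Qed.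

Definition gdef (t : R) : YG R := @mkYG R (nof t) (t - (nof t)%:~R) (nof_lt t).

Lemma YG_eq (C D : YG R) : proj1_sig C = proj1_sig D -> C = D.
Proof. case: C => c hc; case: D => d hd /= E; subst d; congr exist; apply: Prop_irrelevance. Qed.

Lemma gf : cancel fdef gdef.
Proof.
move=> C; apply: YG_eq; rewrite /gdef /mkYG /=.
have [p [hp E]] := proj2_sig C.
rewrite E (fE C p hp E); apply/cls_eq => //.
  by rewrite /GY /Yspace /=; apply: nof_lt.
rewrite /sumR /=; lra.
Qed.

Lemma fg : cancel gdef fdef.
Proof.
move=> t; rewrite (@fE _ (nof t, t - (nof t)%:~R)) //.
  by rewrite /sumR /=; lra.
by rewrite /GY /Yspace /=; apply: nof_lt.
Qed.

End Proof.

Theorem proposition3p12 (R : realType) :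
  exists f : YG R -> R, G_homeomorphism f.
Proof.
exists (@fdef R); split; last first.
  move=> k n y hy; rewrite (@fE _ _ (k + n, y)) // (@fE _ _ (n, y)) //.
  rewrite /sumR /= intrD; lra.
exists (@gdef R); split; first exact: gf.
split; first exact: fg.
split.
- move=> V oV; split; first by move=> p [].
  move=> n; exists [set y | V (n%:~R + y)]; split.
    have h : open ((fun y : R => n%:~R + y) @^-1` V) by apply: open_comp => // x _; exact: tr.
    exact h.
  move=> y hy; split.
  + move=> [_ [C [HV E]]] /=; by rewrite -[n%:~R + y]/(sumR R (n, y)) -(@fE R C (n, y) hy E).
  + move=> HV; split => //; exists (@mkYG R n y hy); split => //.
    by rewrite /= (@fE _ _ (n, y)).
- move=> U [_ Hn].
  pose W n := projT1 (cid (Hn n)).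
  have HW n : open (W n) /\ (forall y, Yspace y -> ([set p | GY p /\ exists C, U C /\ proj1_sig C = cls p] (n, y) <-> W n y)).
    by rewrite /W; case: cid.
  have -> : (@gdef R) @^-1` U = \bigcup_(n in setT) [set t | n%:~R < t /\ W n (- n%:~R + t)].
    apply/funext => t; apply/propext; split.
    + move=> Ut; exists (nof R t) => //; split.
        by have := nof_lt R t; lra.
      have [_ H] := HW (nof R t); apply/H.
        by rewrite /Yspace /=; have := nof_lt R t; lra.
      split; first by rewrite /GY /Yspace /=; have := nof_lt R t; lra.
      exists (gdef R t); split => //=. by rewrite addrC.
    + move=> [n _ [hlt Wt]].
      have hy : Yspace (- n%:~R + t) by rewrite /Yspace /=; lra.
      have [_ H] := HW n; move/(H _ hy): Wt => [_ [C [UC E]]].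
      suff EQ : gdef R t = C by move: UC; rewrite -EQ.
      apply: YG_eq; rewrite E.
      apply: (proj2 (cls_eq R (nof R t, t - (nof R t)%:~R) (n, - n%:~R + t) (nof_lt R t) hy)).
      rewrite /sumR /=; lra.
  apply: bigcup_open => n _; apply: openI; first exact: open_gt.
  have [oW _] := HW n.
  have h : open ((fun t : R => - n%:~R + t) @^-1` (W n)) by apply: open_comp => // x _; exact: tr.
  exact h.
Qed.
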